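(* Let $q$ be a power of the odd prime $p$, let $d$ be a positive integer such that $f(x)=x^d$ is a planar function on $\mathbb F_{q^2}$. For $c\in\mathbb F_{q^2}^*$ and $\sigma\in\mathrm{Gal}(\mathbb F_{q^2}/\mathbb F_p)$ define $\gamma_{c,\sigma}$ on the points of $\Pi(f)$ by $(x,y)\mapsto(\sigma(cx),\sigma(c^dy))$, $(a)\mapsto(\sigma(ca))$ for $a\in\mathbb F_{q^2}$, and $(\infty)\mapsto(\infty)$. Then each $\gamma_{c,\sigma}$ is a collineation of $\Pi(f)$, and all $\gamma_{c,\sigma}$ together form a group $\Gamma$ of collineations of $\Pi(f)$. Moreover, for any $\theta,\theta'\in\mathbb F_{q^2}^*$ such that $\theta^{q+1}$ and $\theta'^{q+1}$ are nonsquares in $\mathbb F_q$, the sets $\mathcal U_\theta$ and $\mathcal U_{\theta'}$ are equivalent, i.e.\ some collineation of $\Pi(f)$ maps $\mathcal U_\theta$ onto $\mathcal U_{\theta'}$.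
   Context: A function $f:\mathbb F_{q^2}\to\mathbb F_{q^2}$ is planar if for every $a\neq0$ the map $x\mapsto f(x+a)-f(x)$ is a bijection. For planar $f$, $\Pi(f)$ is the projective plane with points $(x,y)\in\mathbb F_{q^2}^2$ and $(a)$ for $a\in\mathbb F_{q^2}\cup\{\infty\}$, and lines $L_{a,b}=\{(x,f(x+a)-b):x\in\mathbb F_{q^2}\}\cup\{(a)\}$, $N_a=\{(a,y):y\in\mathbb F_{q^2}\}\cup\{(\infty)\}$ ($a,b\in\mathbb F_{q^2}$), $L_\infty=\{(a):a\in\mathbb F_{q^2}\cup\{\infty\}\}$, incidence being membership. A collineation is a bijection on points mapping lines onto lines. For $\theta\in\mathbb F_{q^2}^*$, $\mathcal U_\theta:=\{(x,t\theta):x\in\mathbb F_{q^2},t\in\mathbb F_q\}\cup\{(\infty)\}$. *)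

(* Defs.v *)
From HB Require Import structures.
From mathcomp Require Import all_boot all_order all_algebra all_field.
Set Implicit Arguments. Unset Strict Implicit. Unset Printing Implicit Defensive.
Import GRing.Theory.
Local Open Scope ring_scope.

Definition planar (F : finFieldType) (f : F -> F) : Prop :=
  forall a : F, a != 0 -> bijective (fun x => f (x + a) - f x).

(* Points of Pi(f): affine points (x,y), and points (a) for a in F
   (Inf (Some a)) or a = infinity (Inf None). *)
Inductive point (F : Type) :=
  | Aff of F & F
  | Inf of option F.

Inductive line (F : Type) :=
  | Lab of F & F
  | Nl of F
  | Linf.

Arguments Inf {F}.
Arguments Linf {F}.

Definition incident (F : finFieldType) (f : F -> F) (P : point F) (l : line F)
  : bool :=
  match l, P with
  | Lab a b, Aff x y => y == f (x + a) - b
  | Lab a _, Inf (Some a') => a' == a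
  | Lab _ _, Inf None => false
  | Nl a, Aff x _ => x == a
  | Nl _, Inf (Some _) => false
  | Nl _, Inf None => true
  | Linf, Aff _ _ => false
  | Linf, Inf _ => true
  end.

Definition collineation (F : finFieldType) (f : F -> F) (g : point F -> point F)
  : Prop :=
  bijective g /\
  forall l : line F, exists l' : line F,
    forall P : point F, incident f P l' <-> exists2 Q, incident f Q l & g Q = P.

Definition gamma (F : finFieldType) (d : nat) (c : F) (sigma : F -> F)
  (P : point F) : point F :=
  match P with
  | Aff x y => Aff (sigma (c * x)) (sigma (c ^+ d * y))
  | Inf (Some a) => Inf (Some (sigma (c * a)))
  | Inf None => Inf None
  end.

(* Elements of Gal(F/F_p): field automorphisms of F (every ring automorphism
   fixes the prime field). *)
Definition galFp (F : finFieldType) (sigma : {rmorphism F -> F}) : Prop :=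
  bijective sigma.

Definition inFq (F : finFieldType) (q : nat) (t : F) : bool := t ^+ q == t.

Definition Uset (F : finFieldType) (q : nat) (theta : F) (P : point F) : Prop :=
  match P with
  | Aff x y => exists2 t, inFq q t & y = t * theta
  | Inf None => True
  | Inf (Some _) => False
  end.

Definition nonsquare_Fq (F : finFieldType) (q : nat) (s : F) : Prop :=
  ~ exists2 r, inFq q r & r ^+ 2 = s.

(* Main.v *)
Require Import Defs.
From HB Require Import structures.
From mathcomp Require Import all_boot all_order all_algebra all_field.
From mathcomp Require Import ring.
Import GRing.Theory.
Set Implicit Arguments. Unset Strict Implicit.
Local Open Scope ring_scope.

Section InvMorph.
Variables (F : finFieldType) (s : {rmorphism F -> F}).
Definition sinv : F -> F := invF (fmorph_inj s).
Lemma sinvK : cancel sinv s. Proof. exact: f_invF. Qed.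
Lemma sK : cancel s sinv. Proof. exact: invF_f. Qed.
Fact sinv_nmod : nmod_morphism sinv.
Proof.
split; first by apply: (fmorph_inj s); rewrite sinvK rmorph0.
by move=> x y; apply: (fmorph_inj s); rewrite rmorphD !sinvK.
Qed.
HB.instance Definition _ := GRing.isNmodMorphism.Build F F sinv sinv_nmod.
Fact sinv_mon : monoid_morphism sinv.
Proof.
split; first by apply: (fmorph_inj s); rewrite sinvK rmorph1.
by move=> x y; apply: (fmorph_inj s); rewrite rmorphM !sinvK.
Qed.
HB.instance Definition _ := GRing.isMonoidMorphism.Build F F sinv sinv_mon.
End InvMorph.


Definition lmap (F : finFieldType) (d : nat) (c : F) (sigma : F -> F) (l : line F) : line F :=
  match l with
  | Lab a b => Lab (sigma (c * a)) (sigma (c ^+ d * b))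
  | Nl a => Nl (sigma (c * a))
  | Linf => Linf
  end.

Lemma incident_gamma (F : finFieldType) (d : nat) (c : F) (sigma : {rmorphism F -> F}) (l : line F) (Q : point F) :
  c != 0 ->
  incident (fun x => x ^+ d) (gamma d c sigma Q) (lmap d c sigma l) =
  incident (fun x => x ^+ d) Q l.
Proof.
move=> c0; have cd0 : c ^+ d != 0 by rewrite expf_neq0.
case: l => [a b|a|]; case: Q => [x y|[a'|]] //=.
- rewrite -rmorphD -rmorphXn -rmorphB (inj_eq (fmorph_inj _)).
  by rewrite -mulrDr exprMn -mulrBr (inj_eq (mulfI cd0)).
- by rewrite (inj_eq (fmorph_inj _)) (inj_eq (mulfI c0)).
- by rewrite (inj_eq (fmorph_inj _)) (inj_eq (mulfI c0)).
Qed.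

Lemma gamma_coll (F : finFieldType) (d : nat) (c : F) (sigma : {rmorphism F -> F}) :
  c != 0 -> galFp sigma -> collineation (fun x => x ^+ d) (gamma d c sigma).
Proof.
move=> c0 _.
pose ginv (P : point F) := match P with
  | Aff x y => Aff (c^-1 * sinv sigma x) ((c ^+ d)^-1 * sinv sigma y)
  | Inf (Some a) => Inf (Some (c^-1 * sinv sigma a))
  | Inf None => Inf None end.
have cd0 : c ^+ d != 0 by rewrite expf_neq0.
have gK : cancel ginv (gamma d c sigma).
  by case=> [x y|[a|]] //=; rewrite !mulrA ?divff // !mul1r !sinvK.
have Kg : cancel (gamma d c sigma) ginv.
  by case=> [x y|[a|]] //=; rewrite !sK !mulrA ?mulVf // !mul1r.
split; first by exists ginv.
move=> l; exists (lmap d c sigma l) => P; split.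
  by move=> HP; exists (ginv P); rewrite // -(@incident_gamma F d c sigma l _ c0) gK.
by case=> Q HQ <-; rewrite incident_gamma.
Qed.
Section Planar.
Variables (F : finFieldType) (d : nat).
Hypothesis d0 : (0 < d)%N.
Hypothesis pl : planar (fun x : F => x ^+ d).
Hypothesis two0 : (2%:R : F) != 0.

Let D (x : F) := (x + 1) ^+ d - x ^+ d.
Lemma Dinj : injective D.
Proof. exact: (bij_inj (pl (oner_neq0 F))). Qed.

Lemma d_even : ~~ odd d.
Proof.
apply/negP => od.
have : D 0 = D (-1).
  rewrite /D addNr add0r expr0n (gtn_eqF d0) expr1n subr0 sub0r.
  by rewrite -signr_odd od expr1 opprK.
move/Dinj/eqP; rewrite eq_sym oppr_eq0; exact/negP/oner_neq0.
Qed.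

Lemma evenN (x : F) : (- x) ^+ d = x ^+ d.
Proof.
by rewrite -mulN1r exprMn -signr_odd (negbTE d_even) expr0 mul1r.
Qed.

Lemma root_unity (w : F) : w ^+ d = 1 -> w = 1 \/ w = -1.
Proof.
move=> wd; have [->|w1] := eqVneq w 1; first by left.
right.
have w10 : w - 1 != 0 by rewrite subr_eq0.
set y := 2%:R / (w - 1).
have hy : w * y = y + 2%:R.
  have h2 : (w - 1) * y = 2%:R by rewrite /y mulrCA divff // mulr1.
  by rewrite -h2; ring.
have : D (y + 1) = D (- (y + 1)).
  have e1 : y + 1 + 1 = w * y by rewrite hy; ring.
  have e2 : - (y + 1) + 1 = - y by ring.
  by rewrite /D e1 e2 exprMn wd mul1r !evenN.
move/Dinj => e.
have : 2%:R * (y + 1) = 0 by rewrite mulr_natl mulr2n {2}e subrr.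
move/eqP; rewrite mulf_eq0 (negbTE two0) /= => /eqP ym.
have ym' : y = -1 by rewrite -[y](addrK 1) ym sub0r.
have := hy; rewrite ym' => h.
have : w = - (w * -1) by rewrite mulrN1 opprK.
by rewrite h; move=> ->; ring.
Qed.

Lemma dpow_eq (x y : F) : x ^+ d = y ^+ d -> x = y \/ x = - y.
Proof.
move=> e; have [y0|y0] := eqVneq y 0.
  move: e; rewrite y0 expr0n (gtn_eqF d0) => /eqP; rewrite expf_eq0 d0 /= => /eqP->.
  by left.
have: (x / y) ^+ d = 1 by rewrite expr_div_n e divff // expf_neq0.
have ex : x = (x / y) * y by rewrite divfK.
by case/root_unity => h; [left|right]; rewrite ex h ?mul1r ?mulN1r.
Qed.

Lemma sq_dpow (s : F) : exists c : F, c ^+ d = s ^+ 2.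
Proof.
set e := d./2.
have de : d = (e * 2)%N by rewrite /e muln2 -[in LHS](odd_double_half d) (negbTE d_even).
have de' : d = (2 * e)%N by rewrite mulnC.
set A := [set x ^+ d | x : F].
set B := [set x ^+ 2 | x : F].
have AB : A \subset B.
  apply/subsetP => _ /imsetP[x _ ->]; apply/imsetP; exists (x ^+ e) => //.
  by rewrite -exprM -de.
have inj : {in B &, injective (fun z : F => z ^+ e)}.
  move=> _ _ /imsetP[x _ ->] /imsetP[z _ ->] /=; rewrite -!exprM -de'.
  by case/dpow_eq => ->; rewrite ?sqrrN.
have : (#|B| <= #|A|)%N.
  rewrite -(card_in_imset inj); apply/subset_leq_card/subsetP => _ /imsetP[_ /imsetP[x _ ->] ->].
  by apply/imsetP; exists x => //; rewrite -exprM -de'.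
move=> le; have : A == B by rewrite eqEcard AB le.
move/eqP => eAB.
have : s ^+ 2 \in A by rewrite eAB; apply/imsetP; exists s.
by case/imsetP => c _ ->; exists c.
Qed.
End Planar.
Lemma two_neq0 (p k : nat) (F : finFieldType) :
  prime p -> odd p -> #|F| = ((p ^ k) ^ 2)%N -> (2%:R : F) != 0.
Proof.
move=> pp op hF.
have pc : p \in [pchar F] by apply: (@card_finPcharP F p (k * 2)) => //; rewrite expnM.
rewrite -(dvdn_pcharf pc) dvdn_prime2 //.
by apply/eqP => p2; move: op; rewrite p2.
Qed.

Lemma sq_norm (q : nat) (F : finFieldType) (s : F) :
  #|F| = (q * q)%N -> nonsquare_Fq q ((s ^+ 2) ^+ q.+1) -> False.
Proof.
move=> hF; apply; exists (s ^+ q.+1).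
  by rewrite /inFq -exprM mulSn exprD -hF expf_card -exprSr.
by rewrite -!exprM mulnC.
Qed.

Lemma unitN (F : finFieldType) (x : F) : x != 0 -> x ^+ #|F|.-1 = 1.
Proof.
move=> x0; apply: (mulIf x0); rewrite mul1r -exprSr prednK ?expf_card //.
exact: (ltn_trans _ (finNzRing_gt1 F)).
Qed.

Lemma ratio (q : nat) (F : finFieldType) (th th' : F) :
  #|F| = (q * q)%N -> odd q -> th != 0 -> th' != 0 ->
  nonsquare_Fq q (th ^+ q.+1) -> nonsquare_Fq q (th' ^+ q.+1) ->
  exists m : F, th' = th * m ^+ 2.
Proof.
move=> hF oq t0 t0' nt nt'.
have F1 : (0 < #|F|)%N by apply: (@ltn_trans 1) => //; apply: finNzRing_gt1.
set N := #|F|.-1.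
have N0 : (0 < N)%N by rewrite /N -ltnS prednK ?finNzRing_gt1 // (ltn_trans _ (finNzRing_gt1 F)).
have : has N.-primitive_root (enum (predC1 (0 : F))).
  apply: cyclic.has_prim_root => //; last by rewrite -cardE cardC1.
    by apply/allP => x; rewrite mem_enum /= unity_rootE => x0; rewrite unitN.
  exact: enum_uniq.
case/hasP => g _ pg.
have oddE (t : F) : t != 0 -> nonsquare_Fq q (t ^+ q.+1) ->
    {i : 'I_N | t = g ^+ i & odd i}.
  move=> tn nT; have [i ei] := prim_rootP pg (unitN tn).
  exists i => //; apply/negPn/negP => ei2.
  apply: (@sq_norm q F (g ^+ (i./2))) => //.
  suff -> : (g ^+ i./2) ^+ 2 = t by [].
  by rewrite ei -exprM muln2 -[in RHS](odd_double_half i) (negbTE ei2) add0n.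
have [i ei oi] := oddE _ t0 nt.
have [j ej oj] := oddE _ t0' nt'.
have oN : odd N = false.
  have : odd N.+1 by rewrite /N prednK // hF oddM oq.
  by rewrite /= => /negbTE.
have iN : (i <= j + N)%N by rewrite (leq_trans (ltnW (ltn_ord i))) // leq_addl.
set z := (j + N - i)%N.
have oz : odd z = false by rewrite /z oddB // oddD oN oi oj.
exists (g ^+ z./2).
have zz : (z./2 * 2 = z)%N by rewrite muln2 -[in RHS](odd_double_half z) oz.
rewrite ei ej -exprM -exprD zz /z subnKC //.
by rewrite exprD (prim_expr_order pg) mulr1.
Qed.

Unset Implicit Arguments. Set Strict Implicit.

Theorem proposition3p3 (p k : nat) (F : finFieldType) (d : nat) :
  prime p -> odd p -> (0 < k)%N ->
  #|F| = ((p ^ k) ^ 2)%N ->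
  (0 < d)%N ->
  planar (fun x : F => x ^+ d) ->
  let q := (p ^ k)%N in
  let f := fun x : F => x ^+ d in
  (* each gamma_{c,sigma} is a collineation *)
  (forall (c : F) (sigma : {rmorphism F -> F}),
      c != 0 -> galFp sigma -> collineation f (gamma d c sigma)) /\
  (* the gamma_{c,sigma} form a group: identity, composition, inverses *)
  (exists (c : F) (sigma : {rmorphism F -> F}),
      [/\ c != 0, galFp sigma & forall P, gamma d c sigma P = P]) /\
  (forall (c1 c2 : F) (s1 s2 : {rmorphism F -> F}),
      c1 != 0 -> c2 != 0 -> galFp s1 -> galFp s2 ->
      exists (c3 : F) (s3 : {rmorphism F -> F}),
        [/\ c3 != 0, galFp s3 &
            forall P, gamma d c1 s1 (gamma d c2 s2 P) = gamma d c3 s3 P]) /\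
  (forall (c : F) (sigma : {rmorphism F -> F}),
      c != 0 -> galFp sigma ->
      exists (c' : F) (s' : {rmorphism F -> F}),
        [/\ c' != 0, galFp s' &
            forall P, gamma d c' s' (gamma d c sigma P) = P /\
                      gamma d c sigma (gamma d c' s' P) = P]) /\
  (* U_theta and U_theta' are equivalent *)
  (forall theta theta' : F,
      theta != 0 -> theta' != 0 ->
      nonsquare_Fq q (theta ^+ q.+1) -> nonsquare_Fq q (theta' ^+ q.+1) ->
      exists g : point F -> point F,
        collineation f g /\
        forall P, Uset q theta' P <-> exists2 Q, Uset q theta Q & g Q = P).
Proof.
move=> pp op k0 hF d0 pl q f.
have two0 := two_neq0 pp op hF.
have hq : #|F| = (q * q)%N by rewrite hF mulnn.
have oq : odd q by rewrite /q oddX op orbT.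
split; first by move=> c s c0 gs; exact: gamma_coll.
split.
  exists 1, (idfun : {rmorphism F -> F}); split; [exact: oner_neq0 | by exists id; move=> x | ].
  by case=> [x y|[a|]] //=; rewrite !mul1r ?expr1n ?mul1r.
split.
  move=> c1 c2 s1 s2 c10 c20 _ _.
  exists (sinv s2 c1 * c2), (s1 \o s2 : {rmorphism F -> F}); split.
  - rewrite mulf_neq0 //; apply: contraNneq c10 => h.
    by rewrite -(sinvK s2 c1) h rmorph0.
  - by exists (sinv s2 \o sinv s1) => x /=; rewrite ?sK ?sinvK.
  - case=> [x y|[a|]] //=.
      by rewrite exprMn -!mulrA (rmorphM s2 (sinv s2 c1)) (rmorphM s2 (sinv s2 c1 ^+ d)) rmorphXn sinvK.
    by rewrite -mulrA (rmorphM s2 (sinv s2 c1)) sinvK.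
split.
  move=> c s c0 _.
  exists (s c^-1), (sinv s); split.
  - by rewrite fmorph_eq0 invr_eq0.
  - by exists s; [exact: sinvK|exact: sK].
  - have cd0 : c ^+ d != 0 by rewrite expf_neq0.
    case=> [x y|[a|]] //=; rewrite -?rmorphXn; split.
    + by rewrite -!rmorphM !sK exprVn !mulKf.
    + rewrite !rmorphM !sinvK !mulrA -!rmorphM exprVn !mulfV //.
      by rewrite !rmorph1 !mul1r.
    + by rewrite -!rmorphM !sK !mulKf.
    + by rewrite !rmorphM !sinvK !mulrA -!rmorphM mulfV // rmorph1 mul1r.
move=> th th' t0 t0' n n'.
have [m em] := ratio hq oq t0 t0' n n'.
have [c ec] := sq_dpow d0 pl two0 m.
have m0 : m != 0.
  by apply: contraNneq t0' => m0; rewrite em m0 expr0n mulr0.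
have c0 : c != 0.
  apply/eqP => c0; move: ec; rewrite c0 expr0n (gtn_eqF d0) => /esym/eqP.
  by rewrite expf_eq0 (negbTE m0) andbF.
have ecd : c ^+ d * th = th' by rewrite ec em mulrC.
exists (gamma d c (idfun : {rmorphism F -> F})); split.
  by apply: gamma_coll => //; exists id.
case=> [x y|[a|]] /=; split.
- case=> t tq ->; exists (Aff (c^-1 * x) (t * th)); first by exists t.
  by rewrite /= mulVKf // mulrCA ecd.
- case=> [[x' y'|[a'|]]] //= [t tq ->] [_ <-]; exists t => //.
  by rewrite mulrCA ecd.
- by [].
- by case=> [[x' y'|[a'|]]] //=.
- by move=> _; exists (Inf None).
- by [].
Qed.
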